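(* Let $X_1,X_2$ be complex Banach spaces and $X:=X_1\times X_2$. Let $A:\mathcal{D}(A)\subset X_1\to X_1$ and $D:\mathcal{D}(D)\subset X_2\to X_2$ be closed operators, let $B:\mathcal{D}(B)\subset X_2\to X_1$ be relatively $D$-bounded and $C:\mathcal{D}(C)\subset X_1\to X_2$ be relatively $A$-bounded. Consider the operator matrix \[ \mathbb{A}=\begin{pmatrix} A & B\\ C & D\end{pmatrix}:\mathcal{D}(A)\times\mathcal{D}(D)\subset X\to X,\qquad \mathbb{A}(x_1,x_2)=(Ax_1+Bx_2,\;Cx_1+Dx_2), \] and assume that $\mathbb{A}$ is closed on $\mathcal{D}(A)\times\mathcal{D}(D)$. Then \[ \sigma(\mathbb{A})\subset \sigma(A)\cup\sigma(D)\cup\big\{\lambda\in\mathbb{C}\setminus(\sigma(A)\cup\sigma(D)) : \mathcal{R}_{21}(\lambda)\ge 1\big\}, \] where $\mathcal{R}_{21}(\lambda):=\|B(\lambda-D)^{-1}C(\lambda-A)^{-1}\|$ (operator norm on $X_1$).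
   Context: An operator $C:\mathcal{D}(C)\subset Y\to Z$ between Banach spaces is relatively $A$-bounded (for $A:\mathcal{D}(A)\subset Y\to Y$) if $\mathcal{D}(A)\subset\mathcal{D}(C)$ and there exist $\alpha,\beta\ge 0$ with $\|Cx\|\le\alpha\|x\|+\beta\|Ax\|$ for all $x\in\mathcal{D}(A)$. For a linear operator $T:\mathcal{D}(T)\subset Y\to Y$, the spectrum $\sigma(T)$ is the set of $\lambda\in\mathbb{C}$ such that $\lambda-T:\mathcal{D}(T)\to Y$ is not bijective with bounded inverse. *)

(* Defs.v *)
From HB Require Import structures.
From mathcomp Require Import all_boot all_order all_algebra.
From mathcomp Require Import all_classical all_reals all_analysis.
From mathcomp Require Import complex.
Import Order.TTheory GRing.Theory Num.Theory.
Import numFieldNormedType.Exports.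
Local Open Scope ring_scope.
Local Open Scope classical_set_scope.

Set Implicit Arguments.
Unset Strict Implicit.
Unset Printing Implicit Defensive.

Section Ops.
Context {R : realType}.

(* A (possibly unbounded) linear operator T : D(T) ⊂ Y -> Z is represented by
   its domain D : set Y and a function T : Y -> Z (values outside D irrelevant). *)
Definition is_subspace {Y : normedModType R[i]} (D : set Y) :=
  D 0 /\ forall (a : R[i]) x y, D x -> D y -> D (a *: x + y).

Definition is_linop {Y Z : normedModType R[i]} (D : set Y) (T : Y -> Z) :=
  is_subspace D /\
  forall (a : R[i]) x y, D x -> D y -> T (a *: x + y) = a *: T x + T y.

Definition closed_op {Y Z : normedModType R[i]} (D : set Y) (T : Y -> Z) :=
  closed [set p : Y * Z | D p.1 /\ T p.1 = p.2].

Definition rel_bounded {Y Z : normedModType R[i]}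
    (DA : set Y) (A : Y -> Y) (DC : set Y) (C : Y -> Z) :=
  DA `<=` DC /\
  exists alpha beta : R[i], 0 <= alpha /\ 0 <= beta /\
    forall x, DA x -> `|C x| <= alpha * `|x| + beta * `|A x|.

Definition is_resolvent {Y : normedModType R[i]}
    (D : set Y) (T : Y -> Y) (l : R[i]) (Rl : Y -> Y) :=
  (forall y, D (Rl y) /\ l *: Rl y - T (Rl y) = y) /\
  (forall x, D x -> Rl (l *: x - T x) = x) /\
  (exists M : R[i], forall y, `|Rl y| <= M * `|y|).

Definition spectrum {Y : normedModType R[i]} (D : set Y) (T : Y -> Y) : set R[i] :=
  [set l | ~ exists Rl, is_resolvent D T l Rl].

Definition opnorm {Y : normedModType R[i]} (S : Y -> Y) : R :=
  sup [set r : R | exists2 x : Y, `|x| <= 1 & `|S x| = (r%:C)%C].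

Definition opmatrix {X1 X2 : normedModType R[i]}
    (A : X1 -> X1) (B : X2 -> X1) (C : X1 -> X2) (D : X2 -> X2) :
    X1 * X2 -> X1 * X2 :=
  fun p => (A p.1 + B p.2, C p.1 + D p.2).

Definition opmatrix_dom {X1 X2 : normedModType R[i]}
    (DA : set X1) (DD : set X2) : set (X1 * X2) :=
  [set p | DA p.1 /\ DD p.2].

End Ops.

(* Main.v *)
Require Import Defs.
From HB Require Import structures.
From mathcomp Require Import all_boot all_order all_algebra.
From mathcomp Require Import all_classical all_reals all_analysis.
From mathcomp Require Import complex.
From mathcomp Require Import ring.
Import Order.TTheory GRing.Theory Num.Theory.
Import numFieldNormedType.Exports.
Local Open Scope ring_scope.
Local Open Scope classical_set_scope.
Section FP.
Context {R : realType} {X : completeNormedModType R[i]}.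

Lemma geo_small {q : R} {e : R[i]} : 0 <= q -> q < 1 -> 0 < e ->
  exists N : nat, (q%:C)%C ^+ N < e.
Proof.
move=> q0 q1 e0.
have e_real : e \is Num.real by apply: gtr0_real.
have er : e = ((complex.Re e)%:C)%C by rewrite RRe_real.
have re0 : 0 < complex.Re e.
  by rewrite -(ltcR (R:=R)) -er.
have := @cvg_geometric R 1 q; rewrite ger0_norm // => /(_ q1) /cvgr_dist_lt.
move=> /(_ _ re0) [N _ HN].
exists N; rewrite er -rmorphXn ltcR.
have := HN N (leqnn N); rewrite /= sub0r normrN /geometric mul1r ger0_norm //.
exact: exprn_ge0.
Qed.

Lemma norm_real (x : X) : `|x| = ((complex.Re `|x|)%:C)%C.
Proof. by rewrite RRe_real. Qed.


Variables (K : X -> X) (q : R).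
Hypothesis linK : forall (a : R[i]) x y, K (a *: x + y) = a *: K x + K y.
Hypothesis q0 : 0 <= q.
Hypothesis q1 : q < 1.
Hypothesis bndK : forall x, `|K x| <= (q%:C)%C * `|x|.

Lemma K0 : K 0 = 0.
Proof.
have := linK 1 0 0; rewrite !scale1r addr0 => /(congr1 (fun z => z - K 0)).
by rewrite subrr addrK => h; rewrite -h.
Qed.

Lemma KB x y : K (x - y) = K x - K y.
Proof. by rewrite addrC -scaleN1r linK scaleN1r addrC. Qed.

Let c : R[i] := (q%:C)%C.
Let c0 : 0 <= c. Proof. by rewrite /c ler0c. Qed.
Let c1 : c < 1. Proof. by move: q1; rewrite -(ltcR (R:=R)). Qed.
Let c1' : 1 - c != 0. Proof. by rewrite subr_eq0 eq_sym lt_eqF. Qed.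

Lemma fixpt w : exists v, v - K v = w.
Proof.
pose F v := w + K v.
pose y n := iter n F 0.
pose L := `|w| / (1 - c).
have L0 : 0 <= L by rewrite divr_ge0 // subr_ge0 ltW.
have cl1 : forall m, `|y m| <= L.
  elim=> [|m IH]; first by rewrite /= normr0.
  rewrite /y iterS -/(y m) /F.
  apply: (le_trans (ler_normD _ _)).
  apply: (le_trans (lerD (lexx _) (bndK _))).
  apply: (le_trans (lerD (lexx _) (ler_wpM2l c0 IH))).
  by rewrite le_eqVlt; apply/orP; left; apply/eqP; rewrite /L; field.
have cl2 : forall n m, `|y (n + m)%N - y n| <= c ^+ n * L.
  elim=> [|n IH] m; first by rewrite add0n subr0 expr0 mul1r.
  rewrite addSn /y !iterS -/(y n) -/(y (n + m)%N) /F.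
  rewrite opprD addrACA subrr add0r -KB.
  apply: (le_trans (bndK _)).
  by rewrite exprS -mulrA ler_wpM2l.
have cv : cvgn y.
  apply/cauchy_cvgP/cauchy_ballP => e e0; near_simpl.
  have eL : 0 < e / (L + 1) by rewrite divr_gt0 // ltr_wpDl.
  have [N HN] := geo_small q0 q1 eL.
  exists ([set n | N <= n]%N, [set n | N <= n]%N); first by split; exists N.
  move=> [n m] [/= Nn Nm]; rewrite -ball_normE /ball_ /=.
  have key : forall a b, (N <= a)%N -> (a <= b)%N -> `|y a - y b| < e.
    move=> a b Na ab; rewrite distrC -(subnKC ab).
    apply: (le_lt_trans (cl2 _ _)).
    apply: (le_lt_trans (y := c ^+ N * (L + 1))).
      apply: ler_pM => //; first exact: exprn_ge0.
        exact: (ler_wiXn2l c0 (ltW c1) Na).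
      by rewrite lerDl.
    by rewrite -ltr_pdivlMr // ltr_wpDl.
  have [nm|mn] := leqP n m; first exact: key.
  by rewrite distrC; apply: key => //; exact: ltnW.
set p := limn y.
have yp : y @ \oo --> p := cv.
have small : forall eps, 0 < eps -> `|p - F p| < eps.
  move=> eps eps0.
  have e2 : 0 < eps / 2 by rewrite divr_gt0 // ltr0n.
  have [N _ HN] := (proj1 (cvgrPdist_lt _ _) yp) _ e2.
  have -> : p - F p = (p - y N.+1) + (y N.+1 - F p) by rewrite addrA subrK.
  apply: normm_lt_split; first by apply: HN => /=; exact: leqnSn.
  rewrite /y iterS -/(y N) /F opprD addrACA subrr add0r -KB.
  apply: (le_lt_trans (bndK _)).
  apply: (le_lt_trans (y := `|p - y N|)); last by apply: HN => /=.
  rewrite distrC -[X in _ <= X]mul1r ler_wpM2r //; exact: ltW.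
have pF : p - F p = 0.
  apply/eqP; apply/negP => /negP; rewrite -normr_gt0 => h.
  by have := small _ h; rewrite ltxx.
exists p; move/eqP: pF; rewrite subr_eq0 => /eqP {1}->.
by rewrite /F addrK.
Unshelve. all: end_near.
Qed.

End FP.

Lemma subrSS (V : zmodType) (a b c d : V) : (a - b) - (c - d) = (a - c) - (b - d).
Proof.
rewrite !opprB !addrA [in LHS]addrAC [in RHS]addrAC; congr (_ + _).
by rewrite addrAC.
Qed.

Section Helpers.
Context {R : realType}.

Definition bnd {Y Z : normedModType R[i]} (f : Y -> Z) :=
  exists M : R[i], 0 <= M /\ forall x, `|f x| <= M * `|x|.

Lemma bnd_abs {Y Z : normedModType R[i]} (f : Y -> Z) (M : R[i]) :
  (forall x, `|f x| <= M * `|x|) -> bnd f.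
Proof.
move=> H; exists `|M|; split => // x.
have h0 : 0 <= M * `|x| by apply: le_trans (H x).
by rewrite -[`|x|]normr_id -normrM ger0_norm.
Qed.

Lemma bnd_comp {Y Z W : normedModType R[i]} (f : Z -> W) (g : Y -> Z) :
  bnd f -> bnd g -> bnd (f \o g).
Proof.
move=> [M1 [h1 H1]] [M2 [h2 H2]]; exists (M1 * M2); split; first exact: mulr_ge0.
move=> x /=; apply: le_trans (H1 _) _; rewrite -mulrA ler_wpM2l //.
Qed.

Lemma bnd_add {Y Z : normedModType R[i]} (f g : Y -> Z) :
  bnd f -> bnd g -> bnd (fun x => f x + g x).
Proof.
move=> [M1 [h1 H1]] [M2 [h2 H2]]; exists (M1 + M2); split; first exact: addr_ge0.
move=> x; apply: le_trans (ler_normD _ _) _; rewrite mulrDl; exact: lerD.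
Qed.

Lemma bnd_pair {Y Z1 Z2 : normedModType R[i]} (f : Y -> Z1) (g : Y -> Z2) :
  bnd f -> bnd g -> bnd (fun x => (f x, g x)).
Proof.
move=> [M1 [h1 H1]] [M2 [h2 H2]]; exists (M1 + M2); split; first exact: addr_ge0.
move=> x; rewrite prod_normE /= comparable_ge_max; last first.
  by apply: real_comparable; exact: normr_real.
apply/andP; split.
  apply: le_trans (H1 _) _; rewrite ler_wpM2r // lerDl //.
apply: le_trans (H2 _) _; rewrite ler_wpM2r // lerDr //.
Qed.

Lemma bnd_fst {Y1 Y2 : normedModType R[i]} : bnd (fun p : Y1 * Y2 => p.1).
Proof.
exists 1; split => // x; rewrite mul1r prod_normE comparable_le_max ?lexx //.
by apply: real_comparable; exact: normr_real.
Qed.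

Lemma bnd_snd {Y1 Y2 : normedModType R[i]} : bnd (fun p : Y1 * Y2 => p.2).
Proof.
exists 1; split => // x; rewrite mul1r prod_normE comparable_le_max ?lexx ?orbT //.
by apply: real_comparable; exact: normr_real.
Qed.

Lemma res_lin {Y : normedModType R[i]} {D : set Y} {T : Y -> Y} {l : R[i]} {Rl : Y -> Y} :
  is_linop D T -> is_resolvent D T l Rl ->
  forall a x y, Rl (a *: x + y) = a *: Rl x + Rl y.
Proof.
move=> [[D0 Dlin] Tlin] [h1 [h2 _]] a x y.
have Dz := Dlin a _ _ (h1 x).1 (h1 y).1.
rewrite -(h2 _ Dz); congr Rl.
rewrite Tlin; [|exact (h1 x).1|exact (h1 y).1].
rewrite scalerDr scalerA [l * a]mulrC -scalerA opprD addrACA -scalerBr.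
by rewrite (h1 x).2 (h1 y).2.
Qed.

Lemma res_bnd {Y : normedModType R[i]} {D : set Y} {T : Y -> Y} {l : R[i]} {Rl : Y -> Y} :
  is_resolvent D T l Rl -> bnd Rl.
Proof. by move=> [_ [_ [M HM]]]; apply: bnd_abs; exact: HM. Qed.

Lemma res_T {Y : normedModType R[i]} {D : set Y} {T : Y -> Y} {l : R[i]} {Rl : Y -> Y} :
  is_resolvent D T l Rl -> forall y, T (Rl y) = l *: Rl y - y.
Proof. by move=> [h1 _] y; rewrite -[X in _ = _ - X](h1 y).2 opprB addrC subrK. Qed.

Lemma bnd_relres {Y Z : normedModType R[i]} (D : set Y) T (DC : set Y)
    (C : Y -> Z) l Rl :
  is_resolvent D T l Rl -> rel_bounded D T DC C -> bnd (C \o Rl).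
Proof.
move=> res [sub [al [be [al0 [be0 H]]]]].
have [MA [MA0 HMA]] := res_bnd res.
apply: (@bnd_abs _ _ _ (al * MA + be * (`|l| * MA + 1))) => y /=.
apply: le_trans (H _ (res.1 y).1) _.
rewrite (res_T res).
have E : (al * MA + be * (`|l| * MA + 1)) * `|y| =
   al * (MA * `|y|) + be * (`|l| * (MA * `|y|) + `|y|) by ring.
rewrite E; apply: lerD; first exact: ler_wpM2l.
apply: ler_wpM2l => //; apply: le_trans (ler_normB _ _) _.
by rewrite normrZ lerD // ler_wpM2l.
Qed.

Lemma lin0 {Y : normedModType R[i]} {K : Y -> Y} :
  (forall (a : R[i]) x y, K (a *: x + y) = a *: K x + K y) -> K 0 = 0.
Proof.
move=> linK.
have := linK 1 0 0; rewrite !scale1r addr0 => /(congr1 (fun z => z - K 0)).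
by rewrite subrr addrK => h; rewrite -h.
Qed.

Lemma opnorm_bound {Y : normedModType R[i]} (K : Y -> Y) :
  (forall (a : R[i]) x y, K (a *: x + y) = a *: K x + K y) -> bnd K ->
  0 <= opnorm K /\ forall x, `|K x| <= ((opnorm K)%:C)%C * `|x|.
Proof.
move=> linK [MK [MK0 HMK]].
set S := [set r : R | exists2 x : Y, `|x| <= 1 & `|K x| = (r%:C)%C].
have MKr : MK = ((complex.Re MK)%:C)%C by rewrite RRe_real // ger0_real.
have hs : has_ubound S.
  exists (complex.Re MK) => r [x x1 e].
  rewrite -(lecR (R:=R)) -e -MKr.
  apply: le_trans (HMK x) _; rewrite -[leRHS]mulr1 ler_wpM2l //.
have S0 : S 0 by exists 0; rewrite ?normr0 // (lin0 linK) normr0.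
have s0 : 0 <= opnorm K := ub_le_sup hs S0.
split => // x.
have [->|nx] := eqVneq x 0; first by rewrite (lin0 linK) !normr0 mulr0.
have xp : 0 < `|x| by rewrite normr_gt0.
set x' := `|x|^-1 *: x.
have Kx' : K x' = `|x|^-1 *: K x by rewrite -[x']addr0 linK (lin0 linK) addr0.
have nx' : `|x'| = 1 by rewrite normrZ normfV normr_id mulVf // gt_eqF.
have Sr : S (complex.Re `|K x'|).
  by exists x'; rewrite ?nx' // RRe_real // normr_real.
have := ub_le_sup hs Sr; rewrite -(lecR (R:=R)) RRe_real ?normr_real //.
rewrite Kx' normrZ normfV normr_id => h.
by rewrite -ler_pdivrMr // mulrC.
Qed.

End Helpers.

Theorem theorem1p1 (R : realType)
    (X1 X2 : completeNormedModType R[i])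
    (DA : set X1) (A : X1 -> X1) (DB : set X2) (B : X2 -> X1)
    (DC : set X1) (C : X1 -> X2) (DD : set X2) (D : X2 -> X2)
    (linA : is_linop DA A) (linB : is_linop DB B)
    (linC : is_linop DC C) (linD : is_linop DD D)
    (clA : closed_op DA A) (clD : closed_op DD D)
    (bB : rel_bounded DD D DB B) (bC : rel_bounded DA A DC C)
    (clM : closed_op (opmatrix_dom DA DD) (opmatrix A B C D)) :
  forall l : R[i], spectrum (opmatrix_dom DA DD) (opmatrix A B C D) l ->
    spectrum DA A l \/ spectrum DD D l \/
    (~ spectrum DA A l /\ ~ spectrum DD D l /\
     forall RA RD, is_resolvent DA A l RA -> is_resolvent DD D l RD ->
       1 <= opnorm (B \o RD \o C \o RA)).
Proof.
move=> l spM.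
case: (pselect (spectrum DA A l)) => [hA|nA]; first by left.
case: (pselect (spectrum DD D l)) => [hD|nD]; first by right; left.
right; right; split => //; split => //.
move=> RA RD resA resD.
rewrite leNgt; apply/negP => lt1.
apply: spM.
set K := B \o RD \o C \o RA.
have DAsub := bC.1.
have DDsub := bB.1.
have RAin : forall y, DA (RA y) by move=> y; exact: (resA.1 y).1.
have RDin : forall y, DD (RD y) by move=> y; exact: (resD.1 y).1.
have linRA := res_lin linA resA.
have linRD := res_lin linD resD.
have RDadd : forall x y, RD (x + y) = RD x + RD y.
  by move=> x y; have := linRD 1 x y; rewrite !scale1r.
have RDsub : forall x y, RD (x - y) = RD x - RD y.
  by move=> x y; rewrite addrC -scaleN1r linRD scaleN1r addrC.
have linK : forall (a : R[i]) x y, K (a *: x + y) = a *: K x + K y.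
  move=> a x y; rewrite /K /= linRA linC.2; try exact: DAsub.
  by rewrite linRD linB.2 //; exact: DDsub.
have bCRA := bnd_relres _ _ _ _ _ _ resA bC.
have bBRD := bnd_relres _ _ _ _ _ _ resD bB.
have bK : bnd K := bnd_comp _ _ bBRD bCRA.
have [q0 bndK] := opnorm_bound _ linK bK.
have fp := fixpt _ _ linK q0 lt1 bndK.
have [N HN] := choice fp.
set c : R[i] := ((opnorm K)%:C)%C.
have c1 : c < 1 by move: lt1; rewrite -(ltcR (R:=R)).
have inj : forall v, v - K v = 0 -> v = 0.
  move=> v /eqP; rewrite subr_eq0 => /eqP Kv.
  apply/eqP; apply: contraT => nv; have vp : 0 < `|v| by rewrite normr_gt0.
  have := bndK v; rewrite -Kv -[X in X <= _]mul1r ler_pM2r // => h.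
  by have := lt_le_trans c1 h; rewrite ltxx.
have Nl : forall v, N (v - K v) = v.
  move=> v; set u := N (v - K v).
  have := HN (v - K v); rewrite -/u => e.
  apply/eqP; rewrite -subr_eq0; apply/eqP; apply: inj.
  by rewrite (KB _ linK) subrSS e subrr.
have bN : bnd N.
  apply: (@bnd_abs _ _ _ _ (1 - c)^-1) => w.
  have c1' : 0 < 1 - c by rewrite subr_gt0.
  rewrite ler_pdivlMl // -[X in _ <= `|X|](HN w).
  apply: le_trans (lerB_dist _ _).
  rewrite mulrBl mul1r lerB //.
pose g (y : X1 * X2) := y.1 + B (RD y.2).
pose Rl (y : X1 * X2) := (RA (N (g y)), RD (y.2 + C (RA (N (g y))))).
have pairE : forall (a c : X1) (b d : X2), l *: (a, b) - (c, d) = (l *: a - c, l *: b - d) by [].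
have Badd : forall x y, DB x -> DB y -> B (x + y) = B x + B y.
  by move=> x y hx hy; have := linB.2 1 x y hx hy; rewrite !scale1r.
have Bsub : forall x y, DB x -> DB y -> B (x - y) = B x - B y.
  move=> x y hx hy; rewrite addrC -scaleN1r linB.2 ?scaleN1r 1?addrC //.
have bg : bnd g.
  exact: (bnd_add _ _ bnd_fst (bnd_comp _ _ bBRD bnd_snd)).
have b1 : bnd (RA \o (N \o g)) := bnd_comp _ _ (res_bnd resA) (bnd_comp _ _ bN bg).
have b2 : bnd (RD \o (fun y => y.2 + (C \o RA \o (N \o g)) y)) :=
  bnd_comp _ _ (res_bnd resD) (bnd_add _ _ bnd_snd (bnd_comp _ _ bCRA (bnd_comp _ _ bN bg))).
have bRl : bnd Rl by exact: (bnd_pair _ _ b1 b2).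
exists Rl; split; [|split].
- move=> [y1 y2]; split.
    by split; [exact: RAin | exact: RDin].
  rewrite /opmatrix /Rl /= pairE; set u := N (g (y1, y2)).
  have Hu : u - K u = g (y1, y2) := HN _.
  congr (_, _).
    rewrite RDadd (Badd _ _ (DDsub _ (RDin _)) (DDsub _ (RDin _))).
    rewrite opprD addrA (resA.1 u).2.
    have -> : B (RD (C (RA u))) = K u by [].
    by rewrite opprD addrA addrAC Hu /g /= addrK.
  by rewrite opprD addrA addrAC (resD.1 _).2 addrK.
- move=> [x1 x2] [/= h1 h2]; rewrite /opmatrix pairE /Rl /g /=.
  set v := l *: x1 - A x1.
  have RAv : RA v = x1 := resA.2.1 x1 h1.
  have RDx2 : RD (l *: x2 - D x2) = x2 := resD.2.1 x2 h2.
  have E2 : l *: x2 - (C x1 + D x2) = (l *: x2 - D x2) - C x1.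
    by rewrite opprD addrA addrAC.
  have Kv : K v = B (RD (C x1)) by rewrite /K /= RAv.
  have Eg : l *: x1 - (A x1 + B x2) + B (RD (l *: x2 - (C x1 + D x2))) = v - K v.
    rewrite E2 RDsub RDx2 Bsub; [|exact: DDsub|exact: DDsub].
    by rewrite Kv opprD addrA -/v addrA subrK.
  by rewrite Eg Nl RAv E2 subrK RDx2.
- by have [M [_ HM]] := bRl; exists M.
Qed.
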